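(* Let $D>0$, $r\in(0,1)$, $\theta_m=Dr^m$ ($m\in\mathbb N$), $\mathcal B=\mathcal B(\{\theta_m\})$, and $b_1,b_2>0$. There exists $C_4>0$, depending only on $b_1,b_2$ (besides $N,D,r$), such that for all $m,q\in\mathbb N$ with $m\ge2$ and $Dr^{m+1}\le1$ and every $g\in V$ satisfying (H), $\|\mathscr L_g^q-K^{(q)}_{g,m}\|_{\mathcal B\to\mathcal B}\le C_4^q(r^{2m})^q$.
   Context: $\Sigma_{\mathbf A}^+$ is the one-sided Markov shift of an $N\times N$ zero-one aperiodic matrix $\mathbf A$, $\sigma_{\mathbf A}$ the shift. $\mathrm{var}_k(\phi)=\sup\{|\phi(\omega)-\phi(\omega')|:\omega_j=\omega'_j,\ 0\le j\le k-1\}$; $V=\{\phi:\mathrm{var}_k(\phi)^{1/k}\to0\}$. $(\mathscr L_g\phi)(\omega)=\sum_{\sigma_{\mathbf A}\omega'=\omega}e^{g(\omega')}\phi(\omega')$. $\mathcal B(\{\theta_m\})=\{\phi\in V:\exists C\ge0,\ \mathrm{var}_k(\phi)\le C\theta_{k+1}^k\ \forall k\ge0\}$ with norm $\|\phi\|_\infty+\inf C$. Fix a Borel probability $\mu$ charging all nonempty open sets; $(E_m\phi)(\omega)=\mu([\omega|m])^{-1}\int_{[\omega|m]}\phi\,d\mu$, $[\omega|m]=\{\xi:\xi_j=\omega_j,0\le j\le m-1\}$. $K_{g,m}=\mathscr L_g\circ E_m$, $K^{(q)}_{g,m}=\mathscr L_g^q-(\mathscr L_g-K_{g,m})^q$.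 Condition (H) on $g\in V$: $e^{\max\mathrm{Re}\,g}\le b_1$ and $\mathrm{var}_k(g)\le b_2\theta_k^k$ for all $k\in\mathbb N$. *)

(* Defs.v *)
From HB Require Import structures.
From mathcomp Require Import all_boot all_order all_algebra.
From mathcomp Require Import all_classical all_reals all_analysis.
From mathcomp Require Import complex.
Set Implicit Arguments. Unset Strict Implicit. Unset Printing Implicit Defensive.
Import Order.TTheory GRing.Theory Num.Theory.
Local Open Scope classical_set_scope.
Local Open Scope ring_scope.

(* Full one-sided shift on the alphabet 'I_n.+1 (N = n.+1 symbols). *)
Definition Shift (n : nat) := nat -> 'I_n.+1.
HB.instance Definition _ n := gen_eqMixin (Shift n).
HB.instance Definition _ n := gen_choiceMixin (Shift n).
HB.instance Definition _ n := isPointed.Build (Shift n) (fun _ => ord0).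

Definition cyl n (w : Shift n) (m : nat) : set (Shift n) :=
  [set x | forall j, (j < m)%N -> x j = w j].

Definition cylinders n : set (set (Shift n)) :=
  [set B | exists w m, B = cyl w m].

(* Borel sigma-algebra of the product topology = sigma-algebra generated by
   the cylinders. *)
Definition SigmaMT n := g_sigma_algebraType (@cylinders n).

Definition zero_one n (A : 'M[int]_n.+1) := forall i j, A i j = 0 \/ A i j = 1.
Definition aperiodic n (A : 'M[int]_n.+1) :=
  exists p, (0 < p)%N /\ forall i j, 0 < (A ^+ p) i j.

Definition admissible n (A : 'M[int]_n.+1) (x : Shift n) :=
  forall j, A (x j) (x j.+1) = 1.
Definition SigmaA n (A : 'M[int]_n.+1) : set (Shift n) := [set x | admissible A x].

Definition scons n (a : 'I_n.+1) (x : Shift n) : Shift n :=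
  fun j => if j is j'.+1 then x j' else a.

(* open subsets of Sigma_A^+ for the (relative) product topology *)
Definition openA n (A : 'M[int]_n.+1) (U : set (Shift n)) :=
  U `<=` SigmaA A /\ forall x, U x -> exists m, cyl x m `&` SigmaA A `<=` U.

Section Ops.
Variables (R : realType) (n : nat) (A : 'M[int]_n.+1).

Definition cexp (z : R[i]) : R[i] :=
  Complex (expR (complex.Re z) * cos (complex.Im z)) (expR (complex.Re z) * sin (complex.Im z)).

Definition var (k : nat) (phi : Shift n -> R[i]) : \bar R :=
  ereal_sup [set e | exists x y, SigmaA A x /\ SigmaA A y /\
     (forall j, (j < k)%N -> x j = y j) /\ e = (Normc.normc (phi x - phi y))%:E].

Definition supnorm (phi : Shift n -> R[i]) : \bar R :=
  ereal_sup [set e | exists x, SigmaA A x /\ e = (Normc.normc (phi x))%:E].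

Definition varroot (phi : Shift n -> R[i]) : R^nat :=
  fun k => fine (var k phi) `^ (k%:R^-1).

Definition inV (phi : Shift n -> R[i]) :=
  (\forall k \near \oo, (var k phi < +oo)%E) /\ varroot phi @ \oo --> 0.

Definition theta (D r : R) (m : nat) : R := D * r ^+ m.

Definition Bconsts (th : nat -> R) (phi : Shift n -> R[i]) : set R :=
  [set C | 0 <= C /\ forall k, (var k phi <= (C * th k.+1 ^+ k)%:E)%E].

Definition inB (th : nat -> R) (phi : Shift n -> R[i]) :=
  inV phi /\ Bconsts th phi !=set0.

Definition Bnorm (th : nat -> R) (phi : Shift n -> R[i]) : R :=
  fine (supnorm phi) + inf (Bconsts th phi).

(* transfer operator: sum over the preimages a.x of x lying in Sigma_A^+ *)
Definition Lop (g : Shift n -> R[i]) (phi : Shift n -> R[i]) : Shift n -> R[i] :=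
  fun x => \sum_(a < n.+1)
    (if `[< admissible A (scons a x) >] then cexp (g (scons a x)) * phi (scons a x)
     else 0).

Definition cint (mu : {measure set (SigmaMT n) -> \bar R}) (D : set (Shift n))
  (f : Shift n -> R[i]) : R[i] :=
  Complex (Rintegral mu D (fun x => complex.Re (f x))) (Rintegral mu D (fun x => complex.Im (f x))).

Definition Eop (mu : {measure set (SigmaMT n) -> \bar R}) (m : nat)
  (phi : Shift n -> R[i]) : Shift n -> R[i] :=
  fun x => Complex (fine (mu (cyl x m `&` SigmaA A)))^-1 0
           * cint mu (cyl x m `&` SigmaA A) phi.

Definition opsub (F G : (Shift n -> R[i]) -> (Shift n -> R[i])) :=
  fun phi x => F phi x - G phi x.

Definition Kop g mu m := fun phi => Lop g (Eop mu m phi).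

Definition Kq g mu m (q : nat) :=
  opsub (iter q (Lop g)) (iter q (opsub (Lop g) (Kop g mu m))).

End Ops.

(* Main.v *)
Require Import Defs.
From HB Require Import structures.
From mathcomp Require Import all_boot all_order all_algebra.
From mathcomp Require Import all_classical all_reals all_analysis.
From mathcomp Require Import complex.
From mathcomp Require Import ring lra zify.
Import Order.TTheory GRing.Theory Num.Theory.
Local Open Scope classical_set_scope.
Local Open Scope ring_scope.

Section Cx.
Context {R : realType}.
Import numFieldTopology.Exports numFieldNormedType.Exports.
Implicit Types (z w : R[i]) (a b : R).
Local Notation nc := (@Normc.normc R).

Lemma nc_ge0 z : 0 <= nc z.
Proof. by case: z => a b; rewrite /Normc.normc sqrtr_ge0. Qed.

Lemma ncE a b : nc (Complex a b) = Num.sqrt (a ^+ 2 + b ^+ 2).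
Proof. by []. Qed.

Lemma nc_Re z : `|complex.Re z| <= nc z.
Proof.
case: z => a b; rewrite ncE /= -sqrtr_sqr; apply: ler_wsqrtr.
by rewrite lerDl sqr_ge0.
Qed.

Lemma nc_Im z : `|complex.Im z| <= nc z.
Proof.
case: z => a b; rewrite ncE /= -sqrtr_sqr; apply: ler_wsqrtr.
by rewrite lerDr sqr_ge0.
Qed.

Lemma nc_le_ReIm z : nc z <= `|complex.Re z| + `|complex.Im z|.
Proof.
case: z => a b; rewrite ncE /=.
rewrite -[X in _ <= X]ger0_norm ?addr_ge0 //.
rewrite -sqrtr_sqr; apply: ler_wsqrtr.
rewrite sqrrD !real_normK ?num_real // addrAC.
by rewrite lerDl mulrn_wge0 // mulr_ge0.
Qed.

Lemma ncD z w : nc (z + w) <= nc z + nc w.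
Proof. exact: le_normcD. Qed.

Lemma ncN z : nc (- z) = nc z.
Proof. exact: normcN. Qed.

Lemma ncB z w : nc (z - w) = nc (w - z).
Proof. by rewrite -ncN opprB. Qed.

Lemma ncM z w : nc (z * w) = nc z * nc w.
Proof. exact: Normc.normcM. Qed.

Lemma nc0 : nc 0 = 0.
Proof. exact: Normc.normc0. Qed.

Lemma ncBle z w : nc (z - w) <= nc z + nc w.
Proof. by apply: le_trans (ncD _ _) _; rewrite ncN. Qed.

Lemma nc_sum (I : finType) (F : I -> R[i]) (P : pred I) :
  nc (\sum_(i | P i) F i) <= \sum_(i | P i) nc (F i).
Proof.
apply: (big_ind2 (fun z r => nc z <= r)); first by rewrite nc0.
  by move=> x1 x2 y1 y2 h1 h2; apply: le_trans (ncD _ _) _; exact: lerD.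
by [].
Qed.

Lemma nc_tri z w u : nc (z - w) <= nc (z - u) + nc (u - w).
Proof.
have -> : z - w = (z - u) + (u - w) by rewrite addrA subrK.
exact: ncD.
Qed.

Lemma cexpD z w : cexp (z + w) = cexp z * cexp w.
Proof.
case: z => a b; case: w => c d; rewrite /cexp /= expRD cosD sinD.
by apply/eqP; rewrite eq_complex /=; apply/andP; split; apply/eqP; ring.
Qed.

Lemma nc_cexp z : nc (cexp z) = expR (complex.Re z).
Proof.
case: z => a b; rewrite /cexp ncE /= !exprMn -mulrDr cos2Dsin2 mulr1.
by rewrite sqrtr_sqr ger0_norm // expR_ge0.
Qed.

Lemma sin_lip a b : `|sin b - sin a| <= `|b - a|.
Proof.
suff H : forall a b : R, a <= b -> `|sin b - sin a| <= `|b - a|.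
  have [ab|ba] := leP a b; first exact: H.
  by rewrite distrC (distrC b); apply: H; exact: ltW.
move=> {}a {}b ab.
have ds : forall x : R, x \in `]a, b[ -> is_derive x 1 sin (cos x).
  by move=> x _; exact: is_derive_sin.
have [|c _ ->] := @MVT_segment R sin cos a b ab ds.
  exact/continuous_subspaceT/continuous_sin.
by rewrite normrM ler_piMl // cos_max.
Qed.

Lemma cos_lip a b : `|cos b - cos a| <= `|b - a|.
Proof.
suff H : forall a b : R, a <= b -> `|cos b - cos a| <= `|b - a|.
  have [ab|ba] := leP a b; first exact: H.
  by rewrite distrC (distrC b); apply: H; exact: ltW.
move=> {}a {}b ab.
have ds : forall x : R, x \in `]a, b[ -> is_derive x 1 cos ((- sin) x).
  by move=> x _; exact: is_derive_cos.
have [|c _ ->] := @MVT_segment R cos (- sin) a b ab ds.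
  exact/continuous_subspaceT/continuous_cos.
by rewrite normrM ler_piMl // /= normrN sin_max.
Qed.

End Cx.

Section Cx2.
Context {R : realType}.
Import numFieldTopology.Exports numFieldNormedType.Exports.
Implicit Types (z w : R[i]) (a b : R).
Local Notation nc := (@Normc.normc R).

Lemma expR_sub1 a : `|a| <= 1 -> `|expR a - 1| <= expR 1 * `|a|.
Proof.
move=> a1.
have h1 := expR_ge1Dx a.
have h2 := expR_ge1Dx (- a).
have ea0 := expR_gt0 a.
rewrite expRN -(ler_pM2r ea0) mulVf ?gt_eqF // in h2.
have aa : a <= 1 by move: a1; rewrite ler_norml => /andP[].
have h4 : expR a <= expR 1 by rewrite ler_expR.
have h5 : 1 <= expR (1:R) by have := expR_ge1Dx (1:R); lra.
have [a0|a0] := leP 0 a.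
  rewrite (ger0_norm a0) ler_norml; apply/andP; split.
    by nra.
  by nra.
rewrite (ltr0_norm a0) ler_norml; apply/andP; split.
  by nra.
by nra.
Qed.

Lemma cexp_sub1 w : nc w <= 1 -> nc (cexp w - 1) <= (1 + expR 1 *+ 2) * nc w.
Proof.
move=> w1.
have hR := nc_Re w; have hI := nc_Im w.
case: w w1 hR hI => a b w1 hR hI.
set N := nc (a +i* b)%C in w1 hR hI *.
have ha : `|a| <= 1 by apply: le_trans hR w1.
have hE := @expR_sub1 a ha.
have h5 : 1 <= expR (1:R) by have := expR_ge1Dx (1:R); lra.
have aa : a <= 1 by move: ha; rewrite ler_norml => /andP[].
have h4 : expR a <= expR 1 by rewrite ler_expR.
have ea0 := expR_gt0 a.
have -> : cexp (a +i* b)%C - 1 = ((expR a * cos b - 1) +i* (expR a * sin b))%C.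
  by rewrite /cexp; apply/eqP; rewrite eq_complex /= subr0 !eqxx.
apply: le_trans (nc_le_ReIm _) _ => /=.
have e1 : `|expR a * cos b - 1| <= expR 1 * `|a| + `|b|.
  have -> : expR a * cos b - 1 = (expR a - 1) * cos b + (cos b - cos 0).
    by rewrite cos0; ring.
  apply: le_trans (ler_normD _ _) _; apply: lerD.
    rewrite normrM; apply: le_trans hE; apply: ler_piMr => //.
    exact: cos_max.
  by have := cos_lip 0 b; rewrite subr0.
have e2 : `|expR a * sin b| <= expR 1 * `|b|.
  rewrite normrM (ger0_norm (ltW ea0)); apply: ler_pM; [exact: expR_ge0|exact: normr_ge0|exact: h4|].
  by have := sin_lip 0 b; rewrite sin0 !subr0.
have t1 : expR 1 * `|a| <= expR 1 * N by rewrite ler_pM2l // (lt_le_trans ltr01 h5).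
have t2 : expR 1 * `|b| <= expR 1 * N by rewrite ler_pM2l // (lt_le_trans ltr01 h5).
rewrite mulr2n !mulrDl mul1r.
lra.
Qed.

Lemma cexp_lip u v (b1 : R) : expR (complex.Re u) <= b1 -> expR (complex.Re v) <= b1 ->
  nc (cexp u - cexp v) <= b1 * (2 + expR 1 *+ 2) * nc (u - v).
Proof.
move=> hu hv.
have h5 : 1 <= expR (1:R) by have := expR_ge1Dx (1:R); lra.
have b10 : 0 <= b1 by apply: le_trans hv; exact: expR_ge0.
have n0 := nc_ge0 (u - v).
have [s1|s1] := leP (nc (u - v)) 1.
  have -> : cexp u - cexp v = cexp v * (cexp (u - v) - 1).
    by rewrite mulrBr mulr1 -cexpD addrCA subrr addr0.
  rewrite ncM nc_cexp; have := @cexp_sub1 (u - v) s1.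
  have e0 := expR_ge0 (complex.Re v).
  have c0 := nc_ge0 (cexp (u - v) - 1).
  by nra.
apply: le_trans (ncBle _ _) _; rewrite !nc_cexp.
have p1 : 0 <= b1 * (nc (u - v) - 1) by rewrite mulr_ge0 // subr_ge0 ltW.
have p2 : 0 <= b1 * expR 1 * nc (u - v) by rewrite !mulr_ge0 // expR_ge0.
rewrite mulr2n; nra.
Qed.
End Cx2.

Section Meas.
Context {n : nat}.

Lemma cyl_meas (w : Shift n) m : measurable (cyl w m : set (SigmaMT n)).
Proof. by apply: sub_sigma_algebra; exists w, m. Qed.

Definition extw k (f : {ffun 'I_k -> 'I_n.+1}) : Shift n :=
  fun j => if (insub j : option 'I_k) is Some i then f i else ord0.

Arguments extw {k}.
Definition truncw k (x : Shift n) : {ffun 'I_k -> 'I_n.+1} := [ffun i : 'I_k => x (val i)].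

Lemma extw_trunc k (x : Shift n) j : (j < k)%N -> extw (truncw k x) j = x j.
Proof. by move=> jk; rewrite /extw (insubT (fun j => j < k)%N jk) /= ffunE. Qed.

Lemma fd_meas k (P : set (Shift n)) :
  (forall x y, (forall j, (j < k)%N -> x j = y j) -> P x -> P y) ->
  measurable (P : set (SigmaMT n)).
Proof.
move=> HP.
have -> : P = \bigcup_(f in [set f : {ffun 'I_k -> 'I_n.+1} | P (extw f)])
                cyl (extw f) k.
  apply/seteqP; split.
  - move=> x Px; exists (truncw k x).
      by apply: HP Px => j jk; rewrite extw_trunc.
    by move=> j jk; rewrite extw_trunc.
  - move=> x [f Pf cx]; apply: HP Pf => j jk; exact: esym (cx j jk).
apply: fin_bigcup_measurable; first exact: finite_finset.
by move=> f _; exact: cyl_meas.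
Qed.

Lemma SigmaA_meas (A : 'M[int]_n.+1) : measurable (SigmaA A : set (SigmaMT n)).
Proof.
have -> : SigmaA A = \bigcap_j [set x : Shift n | A (x j) (x j.+1) = 1].
  apply/seteqP; split => x.
  - by move=> H j _; exact: H.
  - by move=> H j; exact: H.
apply: bigcapT_measurable => j; apply: (@fd_meas j.+2) => x y xy /=.
by rewrite !xy.
Qed.
End Meas.

Section Int.
Context {R : realType} d (T : measurableType d) (mu : {measure set T -> \bar R}).

Lemma int_bnd_nn (D : set T) (G : T -> \bar R) (lo hi : R) : measurable D ->
  0 <= lo -> 0 <= hi -> (forall x, D x -> (lo%:E <= G x <= hi%:E)%E) ->
  (lo%:E * mu D <= \int[mu]_(x in D) G x <= hi%:E * mu D)%E.
Proof.
move=> mD lo0 hi0 H.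
have G0 : forall x, D x -> (0 <= G x)%E.
  by move=> x Dx; have /andP[+ _] := H x Dx; apply: le_trans; rewrite lee_fin.
rewrite -!(integral_cst mu mD) !ge0_integralE //.
apply/andP; split; apply: ereal_sup_le; apply: image_subset => h /= hle x;
  have := hle x; rewrite /patch; case: ifP => // /set_mem Dx;
  have /andP[h1 h2] := H x Dx; move/le_trans; apply => //.
Qed.
Lemma fin_between (e : \bar R) (x y : R) : (x%:E <= e <= y%:E)%E -> e = (fine e)%:E.
Proof. by case: e => [r||] //=; rewrite ?leye_eq ?leeNy_eq ?andbF. Qed.

Arguments fin_between {e x y}.

Lemma max0_ge0 (x : R) : 0 <= Num.max x 0.
Proof. by rewrite le_max lexx orbT. Qed.

Lemma max_posneg (x : R) : Num.max x 0 - Num.max (- x) 0 = x.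
Proof.
have [x0|x0] := boolP (0 <= x); last rewrite -ltNge in x0.
  by rewrite (max_l x0) (max_r _) ?subr0 // oppr_le0.
have nx : 0 <= - x by rewrite oppr_ge0 ltW.
by rewrite (max_r (ltW x0)) (max_l nx) sub0r opprK.
Qed.

Lemma Rint_bnd (D : set T) (f : T -> R) (lo hi M : R) : measurable D ->
  mu D = M%:E -> 0 <= M ->
  (forall x, D x -> lo <= f x <= hi) -> lo * M <= Rintegral mu D f <= hi * M.
Proof.
move=> mD muD M0 H.
rewrite /Rintegral integralE.
have hP := @int_bnd_nn D ((fun x => (f x)%:E)^\+)%E (Num.max lo 0) (Num.max hi 0) mD
  (max0_ge0 _) (max0_ge0 _).
have hQ := @int_bnd_nn D ((fun x => (f x)%:E)^\-)%E (Num.max (- hi) 0) (Num.max (- lo) 0) mD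
  (max0_ge0 _) (max0_ge0 _).
have {hP}hP : ((Num.max lo 0 * M)%:E <= \int[mu]_(x in D) ((fun x => (f x)%:E)^\+)%E x
     <= (Num.max hi 0 * M)%:E)%E.
  rewrite !EFinM -muD; apply: hP => x Dx; have /andP[h1 h2] := H x Dx.
  by rewrite funeposE -EFin_max !lee_fin !le_max2.
have {hQ}hQ : ((Num.max (- hi) 0 * M)%:E <= \int[mu]_(x in D) ((fun x => (f x)%:E)^\-)%E x
     <= (Num.max (- lo) 0 * M)%:E)%E.
  rewrite !EFinM -muD; apply: hQ => x Dx; have /andP[h1 h2] := H x Dx.
  by rewrite funenegE -EFinN -EFin_max !lee_fin !le_max2 // lerN2.
have eP := fin_between hP; have eQ := fin_between hQ.
move: hP hQ; rewrite eP eQ -EFinB /= !lee_fin.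
set p := fine _; set q := fine _.
move=> /andP[p1 p2] /andP[q1 q2].
have k1 := max_posneg lo; have k2 := max_posneg hi.
have e1 : Num.max lo 0 * M - Num.max (- lo) 0 * M = lo * M by rewrite -mulrBl k1.
have e2 : Num.max hi 0 * M - Num.max (- hi) 0 * M = hi * M by rewrite -mulrBl k2.
apply/andP; split; lra.
Qed.
End Int.

Definition agree (n : nat) k (x y : Shift n) := forall j, (j < k)%N -> x j = y j.
Arguments agree {n}.

Section VarS.
Context {R : realType} {n : nat} (A : 'M[int]_n.+1).
Local Notation nc := (@Normc.normc R).
Local Notation S := (SigmaA A).
Implicit Types (phi : Shift n -> R[i]).

Lemma var_le k phi e :
  (forall x y, S x -> S y -> agree k x y -> nc (phi x - phi y) <= e) ->
  (var A k phi <= e%:E)%E.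
Proof.
move=> H; apply: ge_ereal_sup => _ [x [y [Sx [Sy [xy ->]]]]].
by rewrite lee_fin; exact: H.
Qed.

Lemma var_bnd k phi e x y : (var A k phi <= e%:E)%E -> S x -> S y ->
  agree k x y -> nc (phi x - phi y) <= e.
Proof.
move=> H Sx Sy xy; rewrite -lee_fin; apply: le_trans H.
by apply: ereal_sup_ubound; exists x, y.
Qed.

Lemma supnorm_le phi e : (forall x, S x -> nc (phi x) <= e) ->
  (supnorm A phi <= e%:E)%E.
Proof.
move=> H; apply: ge_ereal_sup => _ [x [Sx ->]].
by rewrite lee_fin; exact: H.
Qed.

Lemma fine_le (e : \bar R) (M : R) : 0 <= M -> (e <= M%:E)%E -> fine e <= M.
Proof. by move=> M0; case: e => [r||] //=; rewrite lee_fin. Qed.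

Lemma fine_sup_ge0 (X : set (\bar R)) : (forall e, X e -> (0 <= e)%E) ->
  0 <= fine (ereal_sup X).
Proof.
move=> H; have [[e Xe]|nX] := pselect (exists e, X e).
  have := ereal_sup_ubound Xe; have := H e Xe.
  by case: (ereal_sup X) => [r||] //= e0 er; rewrite -lee_fin (le_trans e0 er).
have -> : X = set0 by apply/seteqP; split => // e Xe; apply: nX; exists e.
by rewrite ereal_sup0.
Qed.

Lemma fine_supnorm_ge0 phi : 0 <= fine (supnorm A phi).
Proof. by apply: fine_sup_ge0 => _ [x [_ ->]]; rewrite lee_fin nc_ge0. Qed.

Lemma fine_var_ge0 k phi : 0 <= fine (var A k phi).
Proof. by apply: fine_sup_ge0 => _ [x [y [_ [_ [_ ->]]]]]; rewrite lee_fin nc_ge0. Qed.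

Lemma nc_sub_scale (u : R[i]) s c d W : `|complex.Re u - s * c| <= W ->
  `|complex.Im u - s * d| <= W -> nc (u - Complex s 0 * Complex c d) <= W *+ 2.
Proof.
case: u => a b ha hb; apply: le_trans (nc_le_ReIm _) _.
rewrite /= mulr2n !mul0r subr0 addr0; exact: lerD.
Qed.

Lemma dist_aux (a I M W : R) : (a - W) * M <= I -> I <= (a + W) * M ->
  `|a * M - I| <= M * W.
Proof. by move=> h1 h2; rewrite ler_distl; apply/andP; split; lra. Qed.

Lemma Eop_err (mu : probability (SigmaMT n) R)
  (hpos : forall U, openA A U -> U !=set0 -> (0 < mu U)%E) m phi x W :
  S x -> (forall y, S y -> agree m x y -> nc (phi y - phi x) <= W) ->
  nc (phi x - Eop A mu m phi x) <= W *+ 2.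
Proof.
move=> Sx H.
set Z := cyl x m `&` SigmaA A.
have mZ : measurable (Z : set (SigmaMT n)).
  exact: measurableI (cyl_meas x m) (SigmaA_meas A).
have Zpos : (0 < mu Z)%E.
  apply: hpos; last by exists x; split.
  split; first by move=> y [].
  move=> y [cy Sy]; exists m => z [cz Sz]; split => // j jm.
  by rewrite cz // cy.
have Zle1 : (mu Z <= 1)%E by exact: probability_le1.
have eZ : mu Z = (fine (mu Z))%:E.
  by apply: (@fin_between _ _ 0 1); rewrite Zle1 ltW.
set M := fine (mu Z) in eZ.
have M0 : 0 < M by rewrite -lte_fin -eZ.
rewrite /Eop /cint -/Z -/M.
have ZE : Z = cyl x m `&` SigmaA A by [].
clearbody M Z.
have W0 : 0 <= W by apply: le_trans (H x Sx (fun _ _ => erefl)); exact: nc_ge0.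
have key : forall (F : R[i] -> R), (forall u v, F (u - v) = F u - F v) ->
    (forall u, `|F u| <= nc u) ->
    `|F (phi x) - M^-1 * Rintegral mu Z (fun y => F (phi y))| <= W.
  move=> F FB Fn.
  have := @Rint_bnd R _ (SigmaMT n) mu Z (fun y => F (phi y)) (F (phi x) - W)
    (F (phi x) + W) M mZ eZ (ltW M0).
  have /[swap]/[apply] : forall y, Z y -> F (phi x) - W <= F (phi y) <= F (phi x) + W.
    move=> y; rewrite ZE => -[cy Sy]; have := le_trans (Fn _) (H y Sy (fun j jm => esym (cy j jm))).
    by rewrite FB ler_distl.
  move=> /andP[i1 i2].
  have -> : F (phi x) - M^-1 * Rintegral mu Z (fun y => F (phi y)) =
    M^-1 * (F (phi x) * M - Rintegral mu Z (fun y => F (phi y))).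
    by rewrite mulrBr mulrCA mulVf ?gt_eqF // mulr1.
  have hh : `|F (phi x) * M - Rintegral mu Z (fun y => F (phi y))| <= M * W.
    exact: dist_aux.
  have Mi0 : 0 <= M^-1 by rewrite invr_ge0 ltW.
  rewrite normrM (ger0_norm Mi0).
  apply: le_trans (ler_wpM2l Mi0 hh) _.
  by rewrite mulrA mulVf ?gt_eqF // mul1r.
apply: nc_sub_scale.
  by apply: key => [[? ?] [? ?]|]; [|exact: nc_Re].
by apply: key => [[? ?] [? ?]|]; [|exact: nc_Im].
Qed.
End VarS.

Section LopS.
Context {R : realType} {n : nat} (A : 'M[int]_n.+1).
Local Notation nc := (@Normc.normc R).
Local Notation S := (SigmaA A).
Implicit Types (phi psi g : Shift n -> R[i]).

Lemma adm_scons a x : admissible A (scons a x) <-> A a (x 0%N) = 1 /\ admissible A x.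
Proof.
split; first by move=> H; split; [exact: (H 0%N)|move=> j; exact: (H j.+1)].
by move=> [h1 h2] [|j] /=; [exact: h1|exact: h2].
Qed.

Lemma Lop_sub g phi psi x :
  Lop A g phi x - Lop A g psi x = Lop A g (fun y => phi y - psi y) x.
Proof.
rewrite /Lop -sumrB; apply: eq_bigr => a _.
by case: ifP => _; [rewrite mulrBr|rewrite subr0].
Qed.

Lemma Lop_sup g psi b1 W : 0 <= W -> 0 <= b1 ->
  (forall x, S x -> expR (complex.Re (g x)) <= b1) ->
  (forall x, S x -> nc (psi x) <= W) ->
  forall x, nc (Lop A g psi x) <= n.+1%:R * (b1 * W).
Proof.
move=> W0 b10 hb hW x; rewrite /Lop; apply: le_trans (nc_sum _ _ _) _.
apply: (@le_trans _ _ (\sum_(a < n.+1) (b1 * W))); last first.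
  by rewrite sumr_const card_ord mulr_natl.
apply: ler_sum => a _.
case: ifP => [/asboolP h|_]; last by rewrite nc0 mulr_ge0.
rewrite ncM nc_cexp; apply: ler_pM; [exact: expR_ge0|exact: nc_ge0|exact: hb|exact: hW].
Qed.
Lemma Lop_var g psi b1 W G X k : 0 <= W -> 0 <= b1 -> 0 <= X -> (0 < k)%N ->
  (forall x, S x -> expR (complex.Re (g x)) <= b1) ->
  (forall x, S x -> nc (psi x) <= W) ->
  (forall x y, S x -> S y -> agree k.+1 x y -> nc (g x - g y) <= G) ->
  (forall x y, S x -> S y -> agree k.+1 x y -> nc (psi x - psi y) <= X) ->
  forall x y, S x -> S y -> agree k x y ->
  nc (Lop A g psi x - Lop A g psi y) <=
    n.+1%:R * (b1 * X + b1 * (2 + expR 1 *+ 2) * G * W).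
Proof.
move=> W0 b10 X0 k0 hb hW hg hpsi x y Sx Sy xy.
rewrite /Lop -sumrB; apply: le_trans (nc_sum _ _ _) _.
apply: (@le_trans _ _ (\sum_(a < n.+1) (b1 * X + b1 * (2 + expR 1 *+ 2) * G * W))).
  2: by rewrite sumr_const card_ord mulr_natl.
apply: ler_sum => a _.
have x0 : x 0%N = y 0%N := xy 0%N k0.
have axy : agree k.+1 (scons a x) (scons a y).
  by move=> [|j] //= jk; exact: xy.
have K0 : 0 <= 2 + expR (1:R) *+ 2 by rewrite addr_ge0 // mulrn_wge0 // expR_ge0.
have G0 : 0 <= G by apply: le_trans (hg x x Sx Sx (fun _ _ => erefl)); exact: nc_ge0.
case: (pselect (admissible A (scons a x))) => hx; last first.
  have hy : ~ admissible A (scons a y).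
    by move=> /adm_scons[h1 _]; apply: hx; apply/adm_scons; rewrite x0.
  rewrite (asboolF hx) (asboolF hy) subr0 nc0.
  by rewrite addr_ge0 // !mulr_ge0.
have hy : admissible A (scons a y).
  by move: hx => /adm_scons[h1 _]; apply/adm_scons; rewrite -x0.
rewrite (asboolT hx) (asboolT hy).
set u := g (scons a x); set v := g (scons a y).
set p := psi (scons a x); set q := psi (scons a y).
have -> : cexp u * p - cexp v * q = cexp u * (p - q) + (cexp u - cexp v) * q.
  by rewrite mulrBr mulrBl addrA subrK.
apply: le_trans (ncD _ _) _; rewrite !ncM nc_cexp; apply: lerD.
  apply: ler_pM; [exact: expR_ge0|exact: nc_ge0|exact: hb|exact: hpsi].
apply: ler_pM; [exact: nc_ge0|exact: nc_ge0| |exact: hW].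
apply: le_trans (cexp_lip u v b1 (hb _ hx) (hb _ hy)) _.
by apply: ler_wpM2l; [rewrite mulr_ge0|exact: hg].
Qed.
End LopS.

Section Pow.
Context {R : realType}.
Implicit Types (D r : R).

Lemma r1_bnd D r m k : 0 <= D -> 0 <= r -> r <= 1 -> (m <= k.+1)%N ->
  (D * r ^+ k.+2) ^+ k.+1 <= D * r ^+ (2 * m) * (D * r ^+ k.+1) ^+ k.
Proof.
move=> D0 r0 r1 mk.
rewrite (exprMn _ D (r ^+ k.+2)) (exprMn _ D (r ^+ k.+1)) -!exprM [D ^+ k.+1]exprS.
have e : r ^+ (k.+2 * k.+1) <= r ^+ (2 * m) * r ^+ (k.+1 * k).
  by rewrite -exprD; apply: ler_wiXn2l => //; nia.
apply: le_trans (ler_wpM2l _ e) _; first by rewrite mulr_ge0 // exprn_ge0.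
by rewrite mulrACA.
Qed.

Lemma r2_bnd D r m k : 0 <= D -> 0 <= r -> r <= 1 -> D * r ^+ m.+1 <= 1 ->
  (0 < k)%N -> (k < m)%N ->
  (D * r ^+ m.+1) ^+ m <= D * r ^+ (2 * m) * (D * r ^+ k.+1) ^+ k.
Proof.
move=> D0 r0 r1 t1 k0 km.
set t := D * r ^+ m.+1 in t1 *.
have t0 : 0 <= t by rewrite mulr_ge0 // exprn_ge0.
have mE : m = (k + (m - k))%N by rewrite subnKC // ltnW.
have tj : t ^+ (m - k) <= t.
  by rewrite -[X in _ <= X]expr1; apply: ler_wiXn2l => //; rewrite subn_gt0.
have -> : t ^+ m = t ^+ k * t ^+ (m - k) by rewrite -exprD -mE.
apply: le_trans (ler_wpM2l (exprn_ge0 k t0) tj) _.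
rewrite /t (exprMn _ D (r ^+ k.+1)) (exprMn _ D (r ^+ m.+1)) -!exprM.
have e : r ^+ (m.+1 * k) * r ^+ m.+1 <= r ^+ (2 * m) * r ^+ (k.+1 * k).
  by rewrite -!exprD; apply: ler_wiXn2l => //; nia.
rewrite mulrACA.
apply: le_trans (ler_wpM2l _ e) _; first by rewrite mulr_ge0 // exprn_ge0.
by rewrite [D ^+ k * D]mulrC mulrACA.
Qed.

Lemma w_bnd D r m : 0 <= D -> 0 <= r -> r <= 1 -> D * r ^+ m.+1 <= 1 -> (2 <= m)%N ->
  (D * r ^+ m.+1) ^+ m <= D ^+ 2 * r ^+ (2 * m).
Proof.
move=> D0 r0 r1 t1 m2.
have t0 : 0 <= D * r ^+ m.+1 by rewrite mulr_ge0 // exprn_ge0.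
apply: le_trans (ler_wiXn2l t0 t1 m2) _.
rewrite (exprMn _ D (r ^+ m.+1)) -exprM; apply: ler_wpM2l; first exact: exprn_ge0.
by apply: ler_wiXn2l => //; nia.
Qed.

Lemma r3_bnd D r k : 0 <= D -> 0 <= r -> r <= 1 ->
  (D * r ^+ k.+1) ^+ k.+1 <= D * (D * r ^+ k.+1) ^+ k.
Proof.
move=> D0 r0 r1; rewrite exprSr mulrC; apply: ler_wpM2r.
  by rewrite exprn_ge0 // mulr_ge0 // exprn_ge0.
by rewrite -[X in _ <= X]mulr1; apply: ler_wpM2l => //; exact: exprn_ile1.
Qed.
End Pow.

Section Ar.
Context {R : realType}.
Lemma ar_sup (N b1 b2 D C P W Kx : R) : 0 <= N -> 0 <= b1 -> 0 <= b2 -> 0 <= D ->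
  0 <= C -> 0 <= P -> 0 <= Kx -> W <= C * D ^+ 2 * P ->
  N * (b1 * (W *+ 2)) <= N * b1 * (D *+ 4 + D ^+ 2 *+ 4 + Kx * b2 * D ^+ 3 *+ 2) * P * C.
Proof.
move=> N0 b0 b20 D0 C0 P0 K0 hW.
have h1 : N * b1 * W <= N * b1 * (C * D ^+ 2 * P) by apply: ler_wpM2l => //; exact: mulr_ge0.
have h2 : 0 <= N * b1 * D * P * C by rewrite !mulr_ge0.
have h3 : 0 <= N * b1 * (Kx * b2 * D ^+ 3) * P * C by rewrite !mulr_ge0 // exprn_ge0.
have h4 : 0 <= N * b1 * (C * D ^+ 2 * P) by rewrite !mulr_ge0 // exprn_ge0.
rewrite !mulrS !mulr0n; lra.
Qed.

Lemma ar_var0 (N b1 b2 D C P W Kx : R) : 0 <= N -> 0 <= b1 -> 0 <= b2 -> 0 <= D ->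
  0 <= C -> 0 <= P -> 0 <= Kx -> W <= C * D ^+ 2 * P ->
  N * (b1 * (W *+ 2)) + N * (b1 * (W *+ 2)) <=
    N * b1 * (D *+ 4 + D ^+ 2 *+ 4 + Kx * b2 * D ^+ 3 *+ 2) * P * C.
Proof.
move=> N0 b0 b20 D0 C0 P0 K0 hW.
have h1 : N * b1 * W <= N * b1 * (C * D ^+ 2 * P) by apply: ler_wpM2l => //; exact: mulr_ge0.
have h2 : 0 <= N * b1 * D * P * C by rewrite !mulr_ge0.
have h3 : 0 <= N * b1 * (Kx * b2 * D ^+ 3) * P * C by rewrite !mulr_ge0 // exprn_ge0.
have h4 : 0 <= N * b1 * (C * D ^+ 2 * P) by rewrite !mulr_ge0 // exprn_ge0.
rewrite !mulrS !mulr0n; lra.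
Qed.

Lemma ar_var (N b1 b2 D C P W Kx th G : R) : 0 <= N -> 0 <= b1 -> 0 <= b2 -> 0 <= D ->
  0 <= C -> 0 <= P -> 0 <= Kx -> 0 <= th -> 0 <= W -> 0 <= G ->
  W <= C * D ^+ 2 * P -> G <= b2 * (D * th) ->
  N * (b1 * (C * D * P * th *+ 4) + b1 * Kx * G * (W *+ 2)) <=
    N * b1 * (D *+ 4 + D ^+ 2 *+ 4 + Kx * b2 * D ^+ 3 *+ 2) * P * C * th.
Proof.
move=> N0 b0 b20 D0 C0 P0 K0 t0 W0 G0 hW hG.
have h1 : G * W <= (b2 * (D * th)) * (C * D ^+ 2 * P) by apply: ler_pM.
have h2 : N * b1 * Kx * (G * W) <= N * b1 * Kx * ((b2 * (D * th)) * (C * D ^+ 2 * P)).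
  by apply: ler_wpM2l => //; rewrite !mulr_ge0.
have h3 : 0 <= N * b1 * D ^+ 2 * P * C * th by rewrite !mulr_ge0 // exprn_ge0.
rewrite !mulrS !mulr0n.
have -> : D ^+ 3 = D * D ^+ 2 by rewrite exprS.
lra.
Qed.
End Ar.

Lemma le_mul4 {R : realType} (x : R) : 0 <= x -> x <= x *+ 4.
Proof. by move=> x0; rewrite !mulrS mulr0n; lra. Qed.

Lemma le_mul22 {R : realType} (a b : R) : a <= b -> a *+ 2 + a *+ 2 <= b *+ 4.
Proof. by move=> ab; rewrite !mulrS !mulr0n; lra. Qed.

Arguments var_bnd {R n A k phi e x y}.
Arguments var_le {R n A k phi e}.
Arguments Eop_err {R n A mu} hpos {m phi x W}.
Arguments Lop_sup {R n A g psi b1 W}.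
Arguments Lop_var {R n A g psi b1 W G X k}.
Arguments Lop_sub {R n A g phi psi x}.
Section Step.
Context {R : realType} {n : nat} (A : 'M[int]_n.+1).
Local Notation nc := (@Normc.normc R).
Local Notation S := (SigmaA A).

Definition Kexp : R := 2 + expR 1 *+ 2.
Definition Kc (D b1 b2 : R) : R :=
  n.+1%:R * b1 * (D *+ 4 + D ^+ 2 *+ 4 + Kexp * b2 * D ^+ 3 *+ 2).

Lemma agree_sym k (x y : Shift n) : agree k x y -> agree k y x.
Proof. by move=> h j jk; rewrite h. Qed.

Lemma cyl_eq m (x y : Shift n) : agree m x y -> cyl x m = cyl y m.
Proof.
move=> h; apply/seteqP; split => z hz j jm; first by rewrite hz // h.
by rewrite hz // h.
Qed.

Lemma step (mu : probability (SigmaMT n) R)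
  (hpos : forall U, openA A U -> U !=set0 -> (0 < mu U)%E)
  m g phi C (D r b1 b2 : R) :
  0 < D -> 0 < r -> r < 1 -> 0 < b1 -> 0 < b2 -> (2 <= m)%N ->
  D * r ^+ m.+1 <= 1 ->
  (forall x, S x -> expR (complex.Re (g x)) <= b1) ->
  (forall k, (0 < k)%N -> (var A k g <= (b2 * theta D r k ^+ k)%:E)%E) ->
  Bconsts A (theta D r) phi C ->
  (forall x, S x -> nc (opsub (Lop A g) (Kop A g mu m) phi x)
     <= Kc D b1 b2 * r ^+ (2 * m) * C) /\
  (forall k, (var A k (opsub (Lop A g) (Kop A g mu m) phi)
     <= (Kc D b1 b2 * r ^+ (2 * m) * C * theta D r k.+1 ^+ k)%:E)%E).
Proof.
move=> D0 r0 r1 b10 b20 m2 Dm hb hg [C0 hC].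
have D0' := ltW D0; have r0' := ltW r0; have r1' := ltW r1.
have b10' := ltW b10; have b20' := ltW b20.
have N0 : 0 <= n.+1%:R :> R by [].
have Kx0 : 0 <= Kexp by rewrite /Kexp addr_ge0 // mulrn_wge0 // expR_ge0.
have P0 : 0 <= r ^+ (2 * m) by exact: exprn_ge0.
have W0 : 0 <= C * theta D r m.+1 ^+ m.
  by rewrite mulr_ge0 // exprn_ge0 // mulr_ge0 // exprn_ge0.
have WD : C * theta D r m.+1 ^+ m <= C * D ^+ 2 * r ^+ (2 * m).
  by rewrite -mulrA; apply: ler_wpM2l => //; exact: w_bnd.
have hphi : forall x y, S x -> S y -> agree m x y ->
    nc (phi y - phi x) <= C * theta D r m.+1 ^+ m.
  by move=> x y Sx Sy xy; apply: var_bnd (hC m) Sy Sx (agree_sym _ _ _ xy).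
set psi := fun x => phi x - Eop A mu m phi x.
have hpsi : forall x, S x -> nc (psi x) <= (C * theta D r m.+1 ^+ m) *+ 2.
  by move=> x Sx; apply: (Eop_err hpos Sx) => y Sy xy; exact: hphi.
have psiE : forall x, opsub (Lop A g) (Kop A g mu m) phi x = Lop A g psi x.
  by move=> x; rewrite /opsub /Kop Lop_sub.
have hsup : forall x, S x -> nc (opsub (Lop A g) (Kop A g mu m) phi x)
     <= n.+1%:R * (b1 * ((C * theta D r m.+1 ^+ m) *+ 2)).
  move=> x Sx; rewrite psiE; apply: Lop_sup => //.
  by rewrite mulrn_wge0.
split.
  move=> x Sx; apply: le_trans (hsup x Sx) _; rewrite /Kc /Kexp.
  exact: ar_sup.
case=> [|k].
  apply: var_le => x y Sx Sy _; rewrite expr0 mulr1.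
  apply: le_trans (ncBle _ _) _; apply: le_trans (lerD (hsup x Sx) (hsup y Sy)) _.
  rewrite /Kc /Kexp; exact: ar_var0.
have th0 : 0 <= theta D r k.+2 ^+ k.+1 by rewrite exprn_ge0 // mulr_ge0 // exprn_ge0.
apply: var_le => x y Sx Sy xy.
rewrite !psiE.
apply: le_trans (Lop_var (G := b2 * theta D r k.+2 ^+ k.+2)
  (X := C * D * r ^+ (2 * m) * theta D r k.+2 ^+ k.+1 *+ 4) _ _ _ _ hb hpsi _ _ _ _ Sx Sy xy) _.
- by rewrite mulrn_wge0.
- by [].
- by rewrite mulrn_wge0 // !mulr_ge0.
- by [].
- move=> u v Su Sv uv; exact: var_bnd (hg k.+2 isT) Su Sv uv.
- move=> u v Su Sv uv.
  have [mk|km] := leqP m k.+2.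
    have -> : psi u - psi v = phi u - phi v.
      rewrite /psi /Eop (cyl_eq m u v (fun j jm => uv j (leq_trans jm mk))).
      by rewrite opprB addrA subrK.
    apply: le_trans (var_bnd (hC k.+2) Su Sv uv) _.
    have := @r1_bnd R D r m k.+1 D0' r0' r1' mk.
    rewrite -/(theta D r k.+3) -/(theta D r k.+2) => h.
    apply: le_trans (ler_wpM2l C0 h) _.
    rewrite !mulrA; apply: le_mul4.
    by rewrite !mulr_ge0.
  apply: le_trans (ncBle _ _) _.
  apply: le_trans (lerD (hpsi u Su) (hpsi v Sv)) _.
  have := @r2_bnd R D r m k.+1 D0' r0' r1' Dm isT (ltnW km).
  rewrite -/(theta D r m.+1) -/(theta D r k.+2) => h.
  have h' := ler_wpM2l C0 h.
  by apply: le_mul22; move: h'; rewrite !mulrA.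
- rewrite /Kc /Kexp; apply: ar_var => //.
    by rewrite mulr_ge0 // exprn_ge0 // mulr_ge0 // exprn_ge0.
  have := @r3_bnd R D r k.+1 D0' r0' r1'.
  by rewrite -/(theta D r k.+2) => h; apply: ler_wpM2l.
Qed.
End Step.

Section BV.
Context {R : realType} {n : nat} (A : 'M[int]_n.+1).
Import numFieldTopology.Exports numFieldNormedType.Exports.
Local Notation nc := (@Normc.normc R).
Local Notation S := (SigmaA A).

Lemma powR_le1C (C p : R) : 0 <= C -> 0 <= p -> p <= 1 -> C `^ p <= 1 + C.
Proof.
move=> C0 p0 p1; have [C1|C1] := leP C 1.
  have := @ge0_ler_powR R p p0 C 1; rewrite powR1 => h.
  apply: le_trans (h _ _ C1) _; rewrite ?nnegrE ?ler01 //.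
  by rewrite lerDl.
apply: le_trans (ler1_powR _ _) _ => //; [exact: ltW|by rewrite lerDr].
Qed.

Lemma Bconsts_inV (D r : R) psi C : 0 < D -> 0 < r -> r < 1 ->
  Bconsts A (theta D r) psi C -> inV A psi.
Proof.
move=> D0 r0 r1 [C0 hC]; split.
  by apply: nearW => k; apply: le_lt_trans (hC k) _; exact: ltey.
have hM : (fun k => ((1 + C) * D * r) * r ^+ k) @ \oo --> (0 : R).
  have := cvgM (cvg_cst ((1 + C) * D * r)) (@cvg_expr R r _).
  rewrite mulr0; apply; by rewrite ger0_norm ?ltW.
apply: (squeeze_cvgr _ (cvg_cst 0) hM).
near=> k.
have k0 : (0 < k)%N by near: k; exists 1%N.
apply/andP; split; first exact: powR_ge0.
rewrite /varroot.
have th0 : 0 <= theta D r k.+1 by apply: mulr_ge0; [exact: ltW|exact: exprn_ge0 (ltW r0)].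
have B0 : 0 <= C * theta D r k.+1 ^+ k by apply: mulr_ge0 => //; exact: exprn_ge0.
have fle : fine (var A k psi) <= C * theta D r k.+1 ^+ k.
  exact: fine_le B0 (hC k).
have p0 : 0 <= k%:R^-1 :> R by rewrite invr_ge0.
apply: le_trans (ge0_ler_powR p0 _ _ fle) _.
- by rewrite nnegrE fine_var_ge0.
- by rewrite nnegrE.
rewrite powRM // ?exprn_ge0 // -powR_mulrn // -powRrM mulfV ?powRr1 //; last first.
  by rewrite pnatr_eq0 -lt0n.
have -> : (1 + C) * D * r * r ^+ k = (1 + C) * theta D r k.+1.
  by rewrite /theta exprS !mulrA.
apply: ler_wpM2r => //.
apply: powR_le1C => //.
rewrite invf_le1; last by rewrite ltr0n.
have h1 : ((1:R) <= k%:R) by rewrite ler1n.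
exact: h1.
Unshelve. all: by end_near.
Qed.
End BV.

Arguments var_bnd {R n A k phi e x y}.
Arguments var_le {R n A k phi e}.
Arguments supnorm_le {R n A phi e}.
Arguments Bconsts_inV {R n A D r psi C}.

Lemma ReB {R : realType} (u v : R[i]) : complex.Re (u - v) = complex.Re u - complex.Re v.
Proof. by case: u; case: v. Qed.

Section Final.
Context {R : realType} {n : nat} (A : 'M[int]_n.+1).
Local Notation nc := (@Normc.normc R).
Local Notation S := (SigmaA A).

Lemma hb_of g b1 (V : R) : (var A 1 g <= V%:E)%E ->
  expR (sup [set complex.Re (g x) | x in SigmaA A]) <= b1 ->
  forall x, S x -> expR (complex.Re (g x)) <= b1.
Proof.
move=> hv hsup x Sx.
apply: le_trans hsup; rewrite ler_expR.
apply: ub_le_sup; last by exists x.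
have hpick : forall a : 'I_n.+1, exists z : Shift n,
    (exists y, S y /\ y 0%N = a) -> S z /\ z 0%N = a.
  move=> a; case: (pselect (exists y, S y /\ y 0%N = a)) => [[y hy]|h].
    by exists y.
  by exists x => hy; exfalso; exact: h hy.
have [pick hp] := choice hpick.
exists (\sum_(a < n.+1) `|complex.Re (g (pick a))| + V).
move=> _ [y Sy <-].
have [Sz z0] : S (pick (y 0%N)) /\ pick (y 0%N) 0%N = y 0%N.
  by apply: hp; exists y.
have ag : agree 1 y (pick (y 0%N)) by move=> [|j] // _; rewrite z0.
have hd := var_bnd hv Sy Sz ag.
have e1 : complex.Re (g y) - complex.Re (g (pick (y 0%N))) <= V.
  by rewrite -ReB; apply: le_trans (ler_norm _) (le_trans (nc_Re _) hd).
have e3 : complex.Re (g (pick (y 0%N))) <= \sum_(a < n.+1) `|complex.Re (g (pick a))|.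
  rewrite (bigD1 (y 0%N)) //=; apply: le_trans (ler_norm _) _.
  by rewrite lerDl sumr_ge0.
rewrite -[complex.Re (g y)](subrK (complex.Re (g (pick (y 0%N))))) addrC.
exact: lerD.
Qed.
Lemma Kc_gt0 (D b1 b2 : R) : 0 < D -> 0 < b1 -> 0 < b2 -> 0 < @Kc R n D b1 b2.
Proof.
move=> D0 b10 b20; rewrite /Kc !mulr_gt0 //.
have h1 : 0 < D *+ 4 by rewrite pmulrn_rgt0.
have h2 : 0 <= D ^+ 2 *+ 4 by rewrite mulrn_wge0 // exprn_ge0 // ltW.
have hK : 0 <= @Kexp R by rewrite /Kexp addr_ge0 // mulrn_wge0 // expR_ge0.
have h3 : 0 <= Kexp * b2 * D ^+ 3 *+ 2.
  rewrite mulrn_wge0 //; apply: mulr_ge0; last exact: exprn_ge0 (ltW D0).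
  by apply: mulr_ge0 => //; exact: ltW.
by rewrite -addrA ltr_pwDl // addr_ge0.
Qed.

Lemma Bstep (mu : probability (SigmaMT n) R)
  (hpos : forall U, openA A U -> U !=set0 -> (0 < mu U)%E)
  m g (D r b1 b2 : R) :
  0 < D -> 0 < r -> r < 1 -> 0 < b1 -> 0 < b2 -> (2 <= m)%N ->
  D * r ^+ m.+1 <= 1 ->
  (forall x, S x -> expR (complex.Re (g x)) <= b1) ->
  (forall k, (0 < k)%N -> (var A k g <= (b2 * theta D r k ^+ k)%:E)%E) ->
  forall phi, inB A (theta D r) phi ->
  inB A (theta D r) (opsub (Lop A g) (Kop A g mu m) phi) /\
  Bnorm A (theta D r) (opsub (Lop A g) (Kop A g mu m) phi) <=
    (@Kc R n D b1 b2 *+ 2) * r ^+ (2 * m) * Bnorm A (theta D r) phi.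
Proof.
move=> D0 r0 r1 b10 b20 m2 Dm hb hg phi [_ [C0 hC0]].
set F := opsub (Lop A g) (Kop A g mu m) phi.
set K := @Kc R n D b1 b2.
set P := r ^+ (2 * m).
have K0 : 0 < K by exact: Kc_gt0.
have P0 : 0 < P by rewrite exprn_gt0.
have key : forall C, Bconsts A (theta D r) phi C ->
    Bconsts A (theta D r) F (K * P * C) /\ fine (supnorm A F) <= K * P * C.
  move=> C hC; have [h1 h2] := @step R n A mu hpos m g phi C D r b1 b2 D0 r0 r1 b10 b20 m2 Dm hb hg hC.
  have C0' : 0 <= C by case: hC.
  have KPC : 0 <= K * P * C by apply: mulr_ge0 => //; apply: mulr_ge0; exact: ltW.
  split; first by split.
  exact: fine_le KPC (supnorm_le h1).
have [hB _] := key C0 hC0.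
have inBF : inB A (theta D r) F.
  by split; [exact: Bconsts_inV D0 r0 r1 hB|exists (K * P * C0)].
split => //.
have lb : forall C, Bconsts A (theta D r) F C -> 0 <= C by move=> C [].
have Bn : forall C, Bconsts A (theta D r) phi C ->
    Bnorm A (theta D r) F <= (K *+ 2 * P) * C.
  move=> C hC; have [hB' hs] := key C hC.
  have hi : inf (Bconsts A (theta D r) F) <= K * P * C.
    by apply: ge_inf hB'; exists 0 => y /lb.
  rewrite /Bnorm; apply: le_trans (lerD hs hi) _.
  by rewrite -mulr2n -!mulrnAl.
have c0 : 0 < K *+ 2 * P by rewrite mulr_gt0 // pmulrn_rgt0.
have hinf : Bnorm A (theta D r) F / (K *+ 2 * P) <= inf (Bconsts A (theta D r) phi).
  apply: lb_le_inf; first by exists C0.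
  by move=> C hC; rewrite ler_pdivrMr // mulrC; exact: Bn.
rewrite ler_pdivrMr // in hinf.
apply: le_trans hinf _; rewrite mulrC; apply: ler_wpM2l; first exact: ltW.
by rewrite /Bnorm lerDr fine_supnorm_ge0.
Qed.
End Final.


Lemma pow_aux {R : realType} (a b c : R) q :
  a * b * (a ^+ q * b ^+ q * c) = a ^+ q.+1 * b ^+ q.+1 * c.
Proof. by rewrite !exprS; ring. Qed.

Theorem lemma5p1 (R : realType) (n : nat) (D r b1 b2 : R) :
  0 < D -> 0 < r -> r < 1 -> 0 < b1 -> 0 < b2 ->
  exists C4 : R, 0 < C4 /\
  forall A : 'M[int]_n.+1, zero_one A -> aperiodic A ->
  forall mu : probability (SigmaMT n) R,
    mu (SigmaA A) = 1%E ->
    (forall U, openA A U -> U !=set0 -> (0 < mu U)%E) ->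
  forall (m q : nat) (g : Shift n -> R[i]),
    (2 <= m)%N -> D * r ^+ m.+1 <= 1 ->
    inV A g ->
    expR (sup [set complex.Re (g x) | x in SigmaA A]) <= b1 ->
    (forall k : nat, (0 < k)%N -> (var A k g <= (b2 * theta D r k ^+ k)%:E)%E) ->
  forall phi : Shift n -> R[i], inB A (theta D r) phi ->
    let T := opsub (iter q (Lop A g)) (Kq A g mu m q) in
    inB A (theta D r) (T phi) /\
    Bnorm A (theta D r) (T phi)
      <= C4 ^+ q * (r ^+ (2 * m)) ^+ q * Bnorm A (theta D r) phi.
Proof.
move=> D0 r0 r1 b10 b20.
exists (@Kc R n D b1 b2 *+ 2); split.
  by rewrite pmulrn_rgt0 // Kc_gt0.
move=> A _ _ mu _ hpos m q g m2 Dm _ hsup hg phi hphi T.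
have hb := hb_of A g b1 _ (hg 1%N isT) hsup.
set F := opsub (Lop A g) (Kop A g mu m).
have -> : T phi = iter q F phi.
  apply/funext => x; rewrite /T /Kq /opsub.
  by rewrite opprB addrC subrK.
elim: q {T} => [|q [IH1 IH2]] /=.
  by rewrite !expr0 !mul1r.
have [h1 h2] := Bstep A mu hpos m g D r b1 b2 D0 r0 r1 b10 b20 m2 Dm hb hg (iter q F phi) IH1.
split => //.
apply: le_trans h2 _.
have c0 : 0 <= @Kc R n D b1 b2 *+ 2 * r ^+ (2 * m).
  have K0 := @Kc_gt0 R n D b1 b2 D0 b10 b20.
  by apply: mulr_ge0; [rewrite mulrn_wge0 // ltW|exact: exprn_ge0 (ltW r0)].
apply: le_trans (ler_wpM2l c0 IH2) _.
by rewrite pow_aux.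
Qed.
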